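(* Let $B,B^*,C,C_2>0$ and $q_1\in\mathbb{R}$ be constants, and let $\{\rho'_L\}_{L\in\mathbb{R}_+}$ be positive numbers with $\lim_{L\to\infty}\rho'_L=0$ and $\lim_{L\to\infty}\rho'_L\sqrt L=\infty$. For $L>1$ define $p_{0,L}=1-\frac1L$, $Z_{0,L}=\ln\frac{p_{0,L}}{1-p_{0,L}}$, $A_L=Z_{0,L}/2$, $$\varepsilon_L=\exp\Big\{\frac{B}{p_{0,L}}\Big[-\frac{L\rho'_L}{C}+\Big(\frac1C-\frac{p_{0,L}}{B}+\frac{3(1-p_{0,L})}{2B^*}\Big)Z_{0,L}+q_1\Big]\Big\},$$ and let $p_{1,L}\in\Big[0,\frac{e^{-Z_{0,L}}-\varepsilon_Le^{-C_2}}{e^{-A_L}-\varepsilon_Le^{-C_2}}\Big]$. Let $\{W_L\}$ be random variables whose expectations satisfy $$p_{0,L}(1-p_{1,L})\mathbb{E}(W_L)=-\frac{p_{0,L}\ln\varepsilon_L}{B}+\frac{\ln(\exp(L(C-\rho'_L))-1)}{C}+\Big[\frac1C-\frac{p_{0,L}}{B}+\frac{1-p_{0,L}}{B^*}\Big]Z_{0,L}+\frac{(1-p_{0,L})|A_L|}{B^*}+q_1.$$ Then $\liminf_{L\to\infty}-\frac{\ln\varepsilon_L}{L\rho'_L}\ge\frac BC$, and $\mathbb{E}(W_L)\le L+3\sqrt L$ for all sufficiently large $L$. *)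

(* Defs.v *)
From Stdlib Require Import Reals Lra.
Open Scope R_scope.

Definition p0 (L : R) : R := 1 - 1 / L.
Definition Z0L (L : R) : R := ln (p0 L / (1 - p0 L)).
Definition AL (L : R) : R := Z0L L / 2.

Definition epsL (B Bs C q1 : R) (rho : R -> R) (L : R) : R :=
  exp (B / p0 L * (- (L * rho L) / C
        + (1 / C - p0 L / B + 3 * (1 - p0 L) / (2 * Bs)) * Z0L L + q1)).

Definition lim_infty (f : R -> R) (l : R) : Prop :=
  forall e, e > 0 -> exists M, forall L, L > M -> Rabs (f L - l) < e.

Definition tends_pinfty (f : R -> R) : Prop :=
  forall K, exists M, forall L, L > M -> f L > K.

Definition liminf_ge (f : R -> R) (c : R) : Prop :=
  forall d, d > 0 -> exists M, forall L, L > M -> f L >= c - d.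

(* Main.v *)
Require Import Defs.
From Stdlib Require Import Reals Lra.
Open Scope R_scope.
From Stdlib Require Import Reals.

Lemma ln_le_xm1 x : 0 < x -> ln x <= x - 1.
Proof. intros h. pose proof (exp_ineq1_le (ln x)). rewrite exp_ln in H; lra. Qed.

Lemma basic L : L > 4 ->
  let s := sqrt L in
  2 <= s /\ s * s = L /\ p0 L = 1 - 1/L /\ 1/2 <= p0 L <= 1 /\
  Z0L L = ln (L - 1) /\ 0 < Z0L L /\ Z0L L <= 2 * s.
Proof.
  intros hL s.
  assert (hs : s * s = L) by (apply sqrt_sqrt; lra).
  assert (s >= 0) by (apply Rle_ge, sqrt_pos).
  assert (2 <= s) by nra.
  assert (hp : p0 L = 1 - 1/L) by reflexivity.
  assert (0 < 1/L < 1/4).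
  { split. apply Rdiv_lt_0_compat; lra.
    apply (Rmult_lt_reg_r L); try lra. field_simplify; lra. }
  assert (hZ : Z0L L = ln (L-1)).
  { unfold Z0L. f_equal. rewrite hp. field. lra. }
  assert (0 < Z0L L).
  { rewrite hZ. rewrite <- ln_1. apply ln_increasing; lra. }
  assert (Z0L L <= 2 * s).
  { rewrite hZ. assert (ln (L-1) < ln L) by (apply ln_increasing; lra).
    replace (ln L) with (ln s + ln s) in H3 by (rewrite <- hs; rewrite ln_mult; lra).
    assert (0 < s) by lra. pose proof (ln_le_xm1 s H4). lra. }
  repeat split; try lra; idtac.
Qed.

Definition Xc (B Bs C q1 : R) (L : R) : R :=
  (1 / C - p0 L / B + 3 * (1 - p0 L) / (2 * Bs)) * Z0L L + q1.

Lemma lneps B Bs C q1 rho L :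
  ln (epsL B Bs C q1 rho L) = B / p0 L * (- (L * rho L) / C + Xc B Bs C q1 L).
Proof. unfold epsL, Xc. rewrite ln_exp. f_equal. ring. Qed.

Definition Kx (B Bs C q1 : R) := 2 * (1/C + 1/B + 3 / (2 * Bs)) + Rabs q1.

Lemma Xbound B Bs C q1 L : B > 0 -> Bs > 0 -> C > 0 -> L > 4 ->
  Rabs (Xc B Bs C q1 L) <= Kx B Bs C q1 * sqrt L.
Proof.
  intros hB hBs hC hL.
  destruct (basic L hL) as (hs2 & hs & hp & hp0 & hZ & hZ0 & hZs).
  set (s := sqrt L) in *.
  unfold Xc, Kx.
  set (a := 1/C). set (b := 1/B). set (e := 1/(2*Bs)).
  assert (0 < a) by (unfold a; apply Rdiv_lt_0_compat; lra).
  assert (0 < b) by (unfold b; apply Rdiv_lt_0_compat; lra).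
  assert (0 < e) by (unfold e; apply Rdiv_lt_0_compat; lra).
  replace (a - p0 L / B + 3 * (1 - p0 L) / (2 * Bs)) with (a - p0 L * b + 3 * (1 - p0 L) * e)
    by (unfold a, b, e; field; lra).
  replace (3 / (2 * Bs)) with (3 * e) by (unfold e; field; lra).
  set (c := a - p0 L * b + 3 * (1 - p0 L) * e).
  assert (hc : Rabs c <= a + b + 3 * e).
  { unfold c. apply Rabs_le. split; nra. }
  set (Z := Z0L L) in *.
  pose proof (Rabs_triang (c * Z) q1).
  rewrite Rabs_mult in H2. rewrite (Rabs_pos_eq Z) in H2 by lra.
  pose proof (Rabs_pos c). pose proof (Rabs_pos q1).
  assert (Rabs c * Z <= (a + b + 3 * e) * (2 * s)).
  { apply Rmult_le_compat; lra. }
  assert (Rabs q1 <= Rabs q1 * s) by nra.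
  nra.
Qed.

Lemma part1 (B Bs C q1 : R) (rho : R -> R)
  (hB : B > 0) (hBs : Bs > 0) (hC : C > 0)
  (hrho_pos : forall L, L > 0 -> rho L > 0)
  (hrho_sqrt : tends_pinfty (fun L => rho L * sqrt L)) :
  liminf_ge (fun L => - ln (epsL B Bs C q1 rho L) / (L * rho L)) (B / C).
Proof.
  intros d hd.
  set (K := Kx B Bs C q1 / (d / (2 * B)) + 1).
  destruct (hrho_sqrt K) as [M1 hM1].
  exists (Rmax 4 M1). intros L hL.
  pose proof (Rmax_l 4 M1). pose proof (Rmax_r 4 M1).
  assert (hL4 : L > 4) by lra.
  specialize (hM1 L ltac:(lra)). simpl in hM1.
  destruct (basic L hL4) as (hs2 & hs & hp & hp0 & hZ & hZ0 & hZs).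
  pose proof (Xbound B Bs C q1 L hB hBs hC hL4) as hX.
  set (s := sqrt L) in *.
  set (X := Xc B Bs C q1 L) in *.
  set (Kx0 := Kx B Bs C q1) in *.
  assert (hKx : 0 <= Kx0) by (pose proof (Rabs_pos X); nra).
  set (r := rho L) in *.
  assert (hr : r > 0) by (apply hrho_pos; lra).
  set (del := d / (2 * B)).
  assert (hdel : 0 < del) by (unfold del; apply Rdiv_lt_0_compat; lra).
  assert (hK : K * del = Kx0 + del) by (unfold K, del; field; lra).
  rewrite lneps. fold X. fold r.
  set (w := 1 / p0 L).
  assert (hw : 1 <= w <= 2).
  { unfold w. split.
    - apply (Rmult_le_reg_r (p0 L)); try lra. field_simplify; lra.
    - apply (Rmult_le_reg_r (p0 L)); try lra. field_simplify; lra. }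
  set (y := X / (L * r)).
  assert (hLr : L * r = s * (r * s)) by (rewrite <- hs; ring).
  assert (hLr0 : L * r > 0) by nra.
  assert (hy : y * (L * r) = X) by (unfold y; field; lra).
  assert (hya : Rabs y < del).
  { assert (Rabs y * (L * r) = Rabs X).
    { rewrite <- hy, Rabs_mult, (Rabs_pos_eq (L*r)); lra. }
    pose proof (Rabs_pos y).
    destruct (Rlt_or_le (Rabs y) del) as [h|h]; auto.
    exfalso. rewrite hLr in H1.
    assert (Rabs y * (r * s) <= Kx0).
    { apply (Rmult_le_reg_l s); nra. }
    assert (del * K <= Rabs y * (r * s)) by (assert (K > 0) by nra; apply Rmult_le_compat; lra).
    lra. }
  replace (- (B / p0 L * (- (L * r) / C + X)) / (L * r)) with (B / C * w - B * w * y)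
    by (unfold w, y; field; split; lra).
  pose proof (Rle_abs y).
  assert (0 < B / C) by (apply Rdiv_lt_0_compat; lra).
  assert (B * w * y <= B * w * Rabs y) by (apply Rmult_le_compat_l; nra).
  assert (B * w * Rabs y <= B * 2 * del) by (pose proof (Rabs_pos y); apply Rmult_le_compat; nra).
  assert (B * 2 * del = d) by (unfold del; field; lra).
  assert (B / C * w >= B / C) by nra. lra.
Qed.

Lemma part2 (B Bs C C2 q1 : R) (rho p1 EW : R -> R) (L0 : R)
  (hB : B > 0) (hBs : Bs > 0) (hC : C > 0) (hC2 : C2 > 0)
  (hrho_pos : forall L, L > 0 -> rho L > 0)
  (hrho0 : lim_infty rho 0)
  (hrho_sqrt : tends_pinfty (fun L => rho L * sqrt L))
  (hL0 : L0 >= 1)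
  (hp1 : forall L, L > L0 ->
     0 <= p1 L /\
     p1 L <= (exp (- Z0L L) - epsL B Bs C q1 rho L * exp (- C2))
             / (exp (- AL L) - epsL B Bs C q1 rho L * exp (- C2)))
  (hEW : forall L, L > L0 ->
     p0 L * (1 - p1 L) * EW L =
       - (p0 L * ln (epsL B Bs C q1 rho L)) / B
       + ln (exp (L * (C - rho L)) - 1) / C
       + (1 / C - p0 L / B + (1 - p0 L) / Bs) * Z0L L
       + (1 - p0 L) * Rabs (AL L) / Bs
       + q1) :
  exists M, forall L, L > M -> EW L <= L + 3 * sqrt L.
Proof.
  set (Kx0 := Kx B Bs C q1).
  set (K2 := C * (Kx0 + 2 / B + 1)).
  destruct (hrho_sqrt K2) as [M2 hM2].
  destruct (hrho0 C hC) as [M0 hM0].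
  exists (Rmax (Rmax 64 L0) (Rmax M0 M2)). intros L hL.
  pose proof (Rmax_l 64 L0). pose proof (Rmax_r 64 L0).
  pose proof (Rmax_l M0 M2). pose proof (Rmax_r M0 M2).
  pose proof (Rmax_l (Rmax 64 L0) (Rmax M0 M2)). pose proof (Rmax_r (Rmax 64 L0) (Rmax M0 M2)).
  assert (hL4 : L > 4) by lra.
  specialize (hM2 L ltac:(lra)). simpl in hM2.
  specialize (hM0 L ltac:(lra)).
  destruct (hp1 L ltac:(lra)) as [hp1a hp1b].
  specialize (hEW L ltac:(lra)).
  destruct (basic L hL4) as (hs2 & hs & hp & hp0 & hZ & hZ0 & hZs).
  pose proof (Xbound B Bs C q1 L hB hBs hC hL4) as hX. fold Kx0 in hX.
  set (s := sqrt L) in *.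
  assert (hs8 : s >= 8) by nra.
  set (r := rho L) in *.
  assert (hr : r > 0) by (apply hrho_pos; lra).
  assert (hrC : r < C).
  { rewrite Rminus_0_r in hM0. apply Rabs_def2 in hM0. lra. }
  set (X := Xc B Bs C q1 L) in *.
  set (eps := epsL B Bs C q1 rho L) in *.
  set (E := B / p0 L * (- (L * r) / C + X)).
  assert (hlne : ln eps = E) by (unfold eps, E, r; apply lneps).
  assert (heps : eps = exp E).
  { rewrite <- hlne. symmetry. apply exp_ln. unfold eps, epsL. apply exp_pos. }
  set (w := 1 / p0 L).
  assert (hw : 1 <= w <= 2).
  { unfold w. split.
    - apply (Rmult_le_reg_r (p0 L)); try lra. field_simplify; lra.
    - apply (Rmult_le_reg_r (p0 L)); try lra. field_simplify; lra. }
  assert (hlnL : ln L < 2 * s).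
  { replace (ln L) with (ln s + ln s) by (rewrite <- hs; rewrite ln_mult; lra).
    pose proof (ln_le_xm1 s ltac:(lra)). lra. }
  assert (hKx : 0 <= Kx0) by (pose proof (Rabs_pos X); nra).
  assert (hB1 : B * (1 / B) = 1) by (field; lra).
  assert (hB0 : 0 < 1 / B) by (apply Rdiv_lt_0_compat; lra).
  assert (hE : E < - ln L).
  { assert (hLr : L * r / C > s * (Kx0 + 2 / B + 1)).
    { replace (L * r / C) with (s * (r * s) / C) by (rewrite <- hs; field; lra).
      apply (Rmult_lt_reg_r C); try lra.
      replace (s * (r * s) / C * C) with (s * (r * s)) by (field; lra).
      unfold K2 in hM2. nra. }
    pose proof (Rle_abs X).
    assert (hD : L * r / C - X > s * (2 / B + 1)) by nra.
    assert (E = - (B * w * (L * r / C - X))) by (unfold E, w; field; split; lra).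
    assert (B * (L * r / C - X) > 2 * s).
    { replace (2 / B) with (2 * (1 / B)) in hD by (field; lra). nra. }
    nra. }
  assert (hepsL : eps < / L).
  { rewrite heps. rewrite <- (exp_ln L) by lra. rewrite <- exp_Ropp.
    apply exp_increasing. lra. }
  assert (heps0 : 0 < eps) by (rewrite heps; apply exp_pos).
  assert (hc2 : exp (- C2) < 1) by (rewrite <- exp_0; apply exp_increasing; lra).
  assert (hc20 : 0 < exp (- C2)) by apply exp_pos.
  set (x := eps * exp (- C2)) in *.
  assert (hx : 0 < x < eps) by (unfold x; split; nra).
  set (Z := Z0L L) in *.
  set (b := exp (- AL L)) in *.
  set (a := exp (- Z)) in *.
  set (u := exp (Z / 2)).
  assert (hb : b = exp (- (Z / 2))) by reflexivity.
  assert (hab : a = b * b) by (unfold a; rewrite hb, <- exp_plus; f_equal; field).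
  assert (hbu : b * u = 1) by (rewrite hb; unfold u; rewrite <- exp_plus, <- exp_0; f_equal; ring).
  assert (huu : u * u = L - 1).
  { unfold u. rewrite <- exp_plus. replace (Z / 2 + Z / 2) with Z by field.
    rewrite hZ. apply exp_ln. lra. }
  assert (hu0 : 0 < u) by apply exp_pos.
  assert (hb0 : 0 < b) by apply exp_pos.
  assert (hus : u >= s / 2) by nra.
  assert (hbs : b * s <= 2) by nra.
  assert (hb1 : b < 1) by nra.
  assert (ha : a = / (L - 1)).
  { unfold a. rewrite exp_Ropp, hZ, exp_ln; lra. }
  assert (hLL : / L < / (L - 1)) by (apply Rinv_lt_contravar; nra).
  assert (hxa : x < a) by lra.
  assert (hab2 : a < b) by nra.
  set (r1 := (a - x) / (b - x)) in *.
  assert (hr1 : r1 * (b - x) = a - x) by (unfold r1; field; lra).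
  assert (hr1b : r1 <= b) by nra.
  assert (hA : Rabs (AL L) = Z / 2).
  { unfold AL. fold Z. apply Rabs_pos_eq. lra. }
  rewrite hA, hlne in hEW.
  set (T := exp (L * (C - r)) - 1) in *.
  assert (hEW' : p0 L * (1 - p1 L) * EW L = ln T / C + L * r / C).
  { rewrite hEW. unfold E, X, Xc. fold Z. field. lra. }
  assert (hT : ln T <= L * (C - r)).
  { assert (hLCr : L * (C - r) > 0) by nra.
    pose proof (exp_ineq1 (L * (C - r)) ltac:(lra)).
    apply Rlt_le. apply Rlt_le_trans with (ln (exp (L * (C - r)))).
    - apply ln_increasing; unfold T; lra.
    - rewrite ln_exp; lra. }
  assert (hRHS : p0 L * (1 - p1 L) * EW L <= L).
  { rewrite hEW'. apply (Rmult_le_reg_r C); try lra.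
    replace ((ln T / C + L * r / C) * C) with (ln T + L * r) by (field; lra).
    replace (L * (C - r)) with (L * C - L * r) in hT by ring. lra. }
  set (P := p0 L * (1 - p1 L)) in *.
  assert (hP0 : P > 0).
  { assert (1 - p1 L > 0) by lra. unfold P; apply Rmult_lt_0_compat; lra. }
  set (t := 1 / L).
  assert (ht : t * L = 1) by (unfold t; field; lra).
  assert (hts : 3 * s * t <= 1).
  { assert (hst : (s * t) * s = 1) by (rewrite Rmult_assoc, (Rmult_comm t s), <- Rmult_assoc, hs; lra).
    assert (0 < s * t) by (apply (Rmult_lt_reg_r s); lra).
    nra. }
  assert (hP : P >= 1 - t - b).
  { unfold P. rewrite hp. fold t.
    assert (0 <= t) by (unfold t; apply Rlt_le, Rdiv_lt_0_compat; lra).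
    assert (t * p1 L >= 0) by (apply Rle_ge, Rmult_le_pos; lra).
    replace ((1 - t) * (1 - p1 L)) with (1 - t - p1 L + t * p1 L) by ring. lra. }
  assert (hLb : L * b <= 2 * s).
  { rewrite <- hs. replace (s * s * b) with (s * (b * s)) by ring.
    replace (2 * s) with (s * 2) by ring. apply Rmult_le_compat_l; lra. }
  assert (hLP : L <= (L + 3 * s) * P).
  { assert (hm : (L + 3 * s) * P >= (L + 3 * s) * (1 - t - b)).
    { apply Rle_ge, Rmult_le_compat_l; lra. }
    replace ((L + 3 * s) * (1 - t - b)) with (L + 3 * s - t * L - 3 * s * t - L * b - 3 * (b * s)) in hm by ring.
    lra. }
  apply (Rmult_le_reg_l P); try lra.
Qed.
Theorem lemma4 (B Bs C C2 q1 : R) (rho p1 EW : R -> R) (L0 : R)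
  (hB : B > 0) (hBs : Bs > 0) (hC : C > 0) (hC2 : C2 > 0)
  (hrho_pos : forall L, L > 0 -> rho L > 0)
  (hrho0 : lim_infty rho 0)
  (hrho_sqrt : tends_pinfty (fun L => rho L * sqrt L))
  (hL0 : L0 >= 1)
  (hp1 : forall L, L > L0 ->
     0 <= p1 L /\
     p1 L <= (exp (- Z0L L) - epsL B Bs C q1 rho L * exp (- C2))
             / (exp (- AL L) - epsL B Bs C q1 rho L * exp (- C2)))
  (hEW : forall L, L > L0 ->
     p0 L * (1 - p1 L) * EW L =
       - (p0 L * ln (epsL B Bs C q1 rho L)) / B
       + ln (exp (L * (C - rho L)) - 1) / C
       + (1 / C - p0 L / B + (1 - p0 L) / Bs) * Z0L L
       + (1 - p0 L) * Rabs (AL L) / Bs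
       + q1) :
  liminf_ge (fun L => - ln (epsL B Bs C q1 rho L) / (L * rho L)) (B / C) /\
  (exists M, forall L, L > M -> EW L <= L + 3 * sqrt L).
Proof.
  split.
  - apply part1; assumption.
  - exact (part2 B Bs C C2 q1 rho p1 EW L0 hB hBs hC hC2 hrho_pos hrho0 hrho_sqrt hL0 hp1 hEW).
Qed.
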